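(* Let $X$ be either the unit interval $[0,1]$ or the circle $S^1$ (with its usual metric), let $\mu$ be a finite nonatomic Radon measure on $X$ giving positive measure to every nonempty open set, and let $T:X\to X$ be an invertible continuous measure-preserving map (a homeomorphism preserving $\mu$). Then for any sequence of natural numbers $n_k\to\infty$, $T$ is rigid along $\{n_k\}$ if and only if $T$ is uniformly rigid along $\{n_k\}$.
   Context: $T$ is rigid along $\{n_k\}$ if $\mu(A\triangle T^{n_k}A)\to 0$ for every measurable $A\subset X$. $T$ is uniformly rigid along $\{n_k\}$ if $\sup_{x\in X} d(T^{n_k}x,x)\to 0$. *)

(* Defs.v *)
From Stdlib Require Import Reals.
Open Scope R_scope.

Inductive Space := Interval | Circle.

(* Interval = [0,1];  Circle = S^1 = R/Z, represented by [0,1). *)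
Definition pt (s : Space) : Type :=
  match s with
  | Interval => {x : R | 0 <= x <= 1}
  | Circle => {x : R | 0 <= x < 1}
  end.

Definition coord (s : Space) : pt s -> R :=
  match s return pt s -> R with
  | Interval => fun x => proj1_sig x
  | Circle => fun x => proj1_sig x
  end.

Definition dist (s : Space) (x y : pt s) : R :=
  match s with
  | Interval => Rabs (coord s x - coord s y)
  | Circle => Rmin (Rabs (coord s x - coord s y)) (1 - Rabs (coord s x - coord s y))
  end.

Definition set (s : Space) := pt s -> Prop.

Definition is_open {s : Space} (U : set s) : Prop :=
  forall x, U x -> exists eps, 0 < eps /\ forall y, dist s x y < eps -> U y.

(* sequential compactness (= compactness in metric spaces) *)
Definition is_compact {s : Space} (K : set s) : Prop :=
  forall u : nat -> pt s, (forall n, K (u n)) ->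
    exists (phi : nat -> nat) (l : pt s),
      (forall n m, (n < m)%nat -> (phi n < phi m)%nat) /\ K l /\
      (forall eps, 0 < eps -> exists N, forall n, (n >= N)%nat ->
          dist s (u (phi n)) l < eps).

Definition sigma_algebra {s : Space} (F : set s -> Prop) : Prop :=
  F (fun _ => True) /\
  (forall A, F A -> F (fun x => ~ A x)) /\
  (forall A : nat -> set s, (forall n, F (A n)) -> F (fun x => exists n, A n x)).

Definition borel {s : Space} (A : set s) : Prop :=
  forall F : set s -> Prop, sigma_algebra F -> (forall U, is_open U -> F U) -> F A.

Definition is_measure {s : Space} (mu : set s -> R) : Prop :=
  (forall A, borel A -> 0 <= mu A) /\
  mu (fun _ => False) = 0 /\
  (forall A : nat -> set s, (forall n, borel (A n)) ->
     (forall n m x, n <> m -> A n x -> A m x -> False) ->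
     infinite_sum (fun n => mu (A n)) (mu (fun x => exists n, A n x))).

Definition nonatomic {s : Space} (mu : set s -> R) : Prop :=
  forall x : pt s, mu (fun y => y = x) = 0.

Definition radon {s : Space} (mu : set s -> R) : Prop :=
  forall A, borel A -> forall eps, 0 < eps ->
    (exists K, is_compact K /\ (forall x, K x -> A x) /\ mu A - eps < mu K) /\
    (exists U, is_open U /\ (forall x, A x -> U x) /\ mu U < mu A + eps).

Definition full_support {s : Space} (mu : set s -> R) : Prop :=
  forall U : set s, is_open U -> (exists x, U x) -> 0 < mu U.

Definition continuous_map {s : Space} (f : pt s -> pt s) : Prop :=
  forall x eps, 0 < eps -> exists delta, 0 < delta /\
    forall y, dist s x y < delta -> dist s (f x) (f y) < eps.

Definition homeomorphism {s : Space} (T : pt s -> pt s) : Prop :=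
  continuous_map T /\
  exists Tinv : pt s -> pt s, continuous_map Tinv /\
    (forall x, Tinv (T x) = x) /\ (forall x, T (Tinv x) = x).

Definition measure_preserving {s : Space} (mu : set s -> R) (T : pt s -> pt s) : Prop :=
  forall A, borel A -> mu (fun x => A (T x)) = mu A.

Definition iter {s : Space} (n : nat) (T : pt s -> pt s) : pt s -> pt s :=
  fun x => Nat.iter n T x.

Definition image_iter {s : Space} (T : pt s -> pt s) (n : nat) (A : set s) : set s :=
  fun y => exists x, A x /\ iter n T x = y.

Definition symdiff {s : Space} (A B : set s) : set s :=
  fun x => (A x /\ ~ B x) \/ (B x /\ ~ A x).

Definition tends_to_infty (n : nat -> nat) : Prop :=
  forall M : nat, exists K, forall k, (k >= K)%nat -> (M <= n k)%nat.

Definition rigid_along {s : Space} (mu : set s -> R) (T : pt s -> pt s)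
  (n : nat -> nat) : Prop :=
  forall A, borel A -> Un_cv (fun k => mu (symdiff A (image_iter T (n k) A))) 0.

Definition uniformly_rigid_along {s : Space} (T : pt s -> pt s) (n : nat -> nat) : Prop :=
  forall eps, 0 < eps -> exists K, forall k, (k >= K)%nat ->
    forall x, dist s (iter (n k) T x) x <= eps.

(* Main.v *)
Require Import Defs.
From Stdlib Require Import Reals Lra Lia Classical FunctionalExtensionality PropExtensionality ProofIrrelevance List.
Open Scope R_scope.

Notation dst := Defs.dist.

Lemma coord_range (s : Space) (x : pt s) : 0 <= coord s x <= 1 /\ (s = Circle -> coord s x < 1).
Proof. destruct s; destruct x as [x Hx]; simpl; split; try lra; intros H; try discriminate; lra. Qed.

Lemma coord_inj (s : Space) (x y : pt s) : coord s x = coord s y -> x = y.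
Proof.
  destruct s; destruct x as [x Hx]; destruct y as [y Hy]; simpl; intros ->;
  f_equal; apply proof_irrelevance.
Qed.

Ltac rcases := repeat (match goal with
  | |- context [Rabs ?a] => let h := fresh "h" in destruct (Rcase_abs a) as [h|h];
        [rewrite (Rabs_left a h) in * | rewrite (Rabs_right a h) in *]
  | H : context [Rabs ?a] |- _ => let h := fresh "h" in destruct (Rcase_abs a) as [h|h];
        [rewrite (Rabs_left a h) in * | rewrite (Rabs_right a h) in *]
  | |- context [Rmin ?a ?b] => let h := fresh "h" in destruct (Rle_dec a b) as [h|h];
        [rewrite (Rmin_left a b h) in * | rewrite (Rmin_right a b) in * by lra]
  | H : context [Rmin ?a ?b] |- _ => let h := fresh "h" in destruct (Rle_dec a b) as [h|h];
        [rewrite (Rmin_left a b h) in * | rewrite (Rmin_right a b) in * by lra]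
  end).

Lemma dist_sym s x y : dst s x y = dst s y x.
Proof. destruct s; destruct x as [x Hx]; destruct y as [y Hy]; simpl; rcases; lra. Qed.

Lemma dist_nonneg s x y : 0 <= dst s x y.
Proof. destruct s; destruct x as [x Hx]; destruct y as [y Hy]; simpl; rcases; lra. Qed.

Lemma dist_tri s x y z : dst s x z <= dst s x y + dst s y z.
Proof. destruct s; destruct x as [x Hx]; destruct y as [y Hy]; destruct z as [z Hz]; simpl; rcases; lra. Qed.

Lemma dist_zero s x y : dst s x y <= 0 -> x = y.
Proof.
  intros H; apply coord_inj.
  destruct s; destruct x as [x Hx]; destruct y as [y Hy]; simpl in *; rcases; lra.
Qed.

Lemma dist_le_coord s x y : dst s x y <= Rabs (coord s x - coord s y).
Proof. destruct s; destruct x as [x Hx]; destruct y as [y Hy]; simpl; rcases; lra. Qed.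

Lemma set_ext {s : Space} (A B : set s) : (forall x, A x <-> B x) -> A = B.
Proof. intros H; apply functional_extensionality; intros x; apply propositional_extensionality; auto. Qed.

Lemma borel_open {s : Space} (U : set s) : is_open U -> borel U.
Proof. intros HU F HF HO; auto. Qed.

Lemma borel_compl {s : Space} (A : set s) : borel A -> borel (fun x => ~ A x).
Proof. intros HA F HF HO. destruct HF as (H1 & H2 & H3). apply H2. apply HA; [split; auto | auto]. Qed.

Lemma borel_cunion {s : Space} (A : nat -> set s) : (forall n, borel (A n)) -> borel (fun x => exists n, A n x).
Proof. intros HA F HF HO. destruct HF as (H1 & H2 & H3). apply H3. intros n; apply HA; [split; auto | auto]. Qed.

Lemma borel_union {s : Space} (A B : set s) : borel A -> borel B -> borel (fun x => A x \/ B x).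
Proof.
  intros HA HB.
  replace (fun x => A x \/ B x) with (fun x => exists n, (match n with O => A | _ => B end) x).
  - apply borel_cunion. intros [|n]; auto.
  - apply set_ext. intros x; split.
    + intros [[|n] H]; auto.
    + intros [H|H]; [exists O | exists 1%nat]; auto.
Qed.

Lemma borel_inter {s : Space} (A B : set s) : borel A -> borel B -> borel (fun x => A x /\ B x).
Proof.
  intros HA HB.
  replace (fun x => A x /\ B x) with (fun x => ~ ((fun y => ~ A y) x \/ (fun y => ~ B y) x)).
  - apply borel_compl, borel_union; apply borel_compl; auto.
  - apply set_ext. intros x; split.
    + intros H; split; apply NNPP; tauto.
    + tauto.
Qed.

Lemma borel_diff {s : Space} (A B : set s) : borel A -> borel B -> borel (fun x => A x /\ ~ B x).
Proof. intros; apply borel_inter; auto; apply borel_compl; auto. Qed.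

Lemma borel_symdiff {s : Space} (A B : set s) : borel A -> borel B -> borel (symdiff A B).
Proof. intros; unfold symdiff; apply borel_union; apply borel_diff; auto. Qed.

Lemma borel_double_compl {s : Space} (A : set s) : borel (fun x => ~ A x) -> borel A.
Proof.
  intros H. replace A with (fun x => ~ (fun y => ~ A y) x).
  - apply borel_compl; auto.
  - apply set_ext; intros x; split; [apply NNPP | tauto].
Qed.

Lemma mu_add {s : Space} (mu : set s -> R) (A B : set s) : is_measure mu ->
  borel A -> borel B -> (forall x, A x -> B x -> False) ->
  mu (fun x => A x \/ B x) = mu A + mu B.
Proof.
  intros (Hpos & H0 & Hadd) HA HB Hd.
  set (f := fun n : nat => match n with O => A | 1%nat => B | _ => (fun _ : pt s => False) end).
  assert (Hs : infinite_sum (fun n => mu (f n)) (mu (fun x => exists n, f n x))).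
  { apply Hadd.
    - intros [|[|n]]; simpl; auto. apply borel_open. intros x [].
    - intros [|[|n]] [|[|m]] x Hnm H1 H2; simpl in *; try tauto;
      try (apply Hnm; reflexivity); eapply Hd; eauto. }
  replace (fun x => exists n, f n x) with (fun x => A x \/ B x) in Hs.
  2:{ apply set_ext; intros x; split.
      - intros [H|H]; [exists O|exists 1%nat]; auto.
      - intros [[|[|n]] H]; simpl in H; tauto. }
  apply (uniqueness_sum _ _ _ Hs).
  intros eps Heps. exists 1%nat. intros n Hn.
  assert (E : sum_f_R0 (fun n => mu (f n)) n = mu A + mu B).
  { induction n as [|n IH]; [lia|].
    destruct n as [|n]; simpl; [reflexivity|].
    simpl in IH. rewrite IH by lia. simpl. rewrite H0. ring. }
  rewrite E. unfold R_dist. rewrite Rminus_diag, Rabs_R0; auto.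
Qed.

Lemma mu_pos {s : Space} (mu : set s -> R) (A : set s) : is_measure mu -> borel A -> 0 <= mu A.
Proof. intros (H & _ & _); auto. Qed.

Lemma mu_split {s : Space} (mu : set s -> R) (A B : set s) : is_measure mu ->
  borel A -> borel B -> (forall x, A x -> B x) ->
  mu B = mu A + mu (fun x => B x /\ ~ A x).
Proof.
  intros Hm HA HB Hsub.
  rewrite <- mu_add; auto.
  - f_equal. apply set_ext; intros x; split.
    + intros H. destruct (classic (A x)); tauto.
    + intros [H|H]; [apply Hsub; auto | tauto].
  - apply borel_diff; auto.
  - tauto.
Qed.

Lemma mu_mono {s : Space} (mu : set s -> R) (A B : set s) : is_measure mu ->
  borel A -> borel B -> (forall x, A x -> B x) -> mu A <= mu B.
Proof.
  intros Hm HA HB Hsub. rewrite (mu_split mu A B) by auto.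
  assert (0 <= mu (fun x => B x /\ ~ A x)) by (apply mu_pos; auto; apply borel_diff; auto). lra.
Qed.

Lemma mu_subadd {s : Space} (mu : set s -> R) (A B : set s) : is_measure mu ->
  borel A -> borel B -> mu (fun x => A x \/ B x) <= mu A + mu B.
Proof.
  intros Hm HA HB.
  replace (fun x => A x \/ B x) with (fun x => A x \/ (fun y => B y /\ ~ A y) x).
  - rewrite mu_add; auto.
    + assert (mu (fun y => B y /\ ~ A y) <= mu B) by (apply mu_mono; auto; [apply borel_diff; auto | tauto]). lra.
    + apply borel_diff; auto.
    + tauto.
  - apply set_ext; intros x; split; [tauto|]. intros [H|H]; [tauto|]. destruct (classic (A x)); tauto.
Qed.

Lemma iter_S {s : Space} (T : pt s -> pt s) n x : iter (S n) T x = T (iter n T x).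
Proof. reflexivity. Qed.

Lemma cont_iter {s : Space} (f : pt s -> pt s) n : continuous_map f -> continuous_map (iter n f).
Proof.
  intros Hf. induction n as [|n IH].
  - intros x eps He. exists eps; split; auto.
  - intros x eps He. destruct (Hf (iter n f x) eps He) as (d1 & Hd1 & H1).
    destruct (IH x d1 Hd1) as (d2 & Hd2 & H2). exists d2; split; auto.
    intros y Hy. rewrite !iter_S. apply H1, H2; auto.
Qed.

Lemma iter_comm {s : Space} (T : pt s -> pt s) n x : iter n T (T x) = T (iter n T x).
Proof. revert x; induction n as [|n IH]; intros x; [reflexivity|]. rewrite !iter_S, IH; reflexivity. Qed.

Lemma iter_inv1 {s : Space} (T Ti : pt s -> pt s) n x : (forall x, Ti (T x) = x) -> iter n Ti (iter n T x) = x.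
Proof.
  intros H. revert x; induction n as [|n IH]; intros x; [reflexivity|].
  replace (iter (S n) T x) with (iter n T (T x)) by (rewrite iter_comm; reflexivity).
  rewrite iter_S, IH. apply H.
Qed.

Lemma image_iter_iff {s : Space} (T Ti : pt s -> pt s) n (A : set s) y :
  (forall x, Ti (T x) = x) -> (forall x, T (Ti x) = x) ->
  (image_iter T n A y <-> A (iter n Ti y)).
Proof.
  intros H1 H2. split.
  - intros (x & Hx & <-). rewrite iter_inv1; auto.
  - intros H. exists (iter n Ti y); split; auto. apply iter_inv1; auto.
Qed.

Lemma image_open {s : Space} (T : pt s -> pt s) n (U : set s) : homeomorphism T -> is_open U ->
  is_open (image_iter T n U).
Proof.
  intros (HT & Ti & HTi & H1 & H2) HU y Hy.
  rewrite (image_iter_iff T Ti) in Hy by auto.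
  destruct (HU _ Hy) as (e & He & Hb).
  destruct (cont_iter Ti n HTi y e He) as (d & Hd & Hc).
  exists d; split; auto. intros z Hz. rewrite (image_iter_iff T Ti) by auto. apply Hb, Hc; auto.
Qed.

Lemma image_borel {s : Space} (T : pt s -> pt s) n (A : set s) : homeomorphism T -> borel A ->
  borel (image_iter T n A).
Proof.
  intros HT HA. pose proof HT as (HT' & Ti & HTi & H1 & H2).
  set (F := fun B : set s => borel (image_iter T n B)).
  apply (HA F).
  - split; [|split].
    + unfold F. replace (image_iter T n (fun _ => True)) with (fun _ : pt s => True).
      * apply borel_open. intros x _; exists 1; split; [lra|auto].
      * apply set_ext; intros x. rewrite (image_iter_iff T Ti) by auto. tauto.
    + intros B HB. unfold F in *.
      replace (image_iter T n (fun x => ~ B x)) with (fun y => ~ (image_iter T n B) y).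
      * apply borel_compl; auto.
      * apply set_ext; intros x. rewrite !(image_iter_iff T Ti) by auto. tauto.
    + intros B HB. unfold F in *.
      replace (image_iter T n (fun x => exists k, B k x)) with (fun y => exists k, (image_iter T n (B k)) y).
      * apply borel_cunion; auto.
      * apply set_ext; intros x. setoid_rewrite (image_iter_iff T Ti); auto. tauto.
  - intros U HU. apply borel_open, image_open; auto.
Qed.

Lemma mu_image {s : Space} (mu : set s -> R) (T : pt s -> pt s) n (A : set s) :
  homeomorphism T -> measure_preserving mu T -> borel A -> mu (image_iter T n A) = mu A.
Proof.
  intros HT Hmp HA. pose proof HT as (HT' & Ti & HTi & H1 & H2).
  induction n as [|n IH].
  - f_equal. apply set_ext; intros x. rewrite (image_iter_iff T Ti) by auto. simpl. tauto.
  - rewrite <- IH. rewrite <- (Hmp (image_iter T (S n) A)) by (apply image_borel; auto).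
    f_equal. apply set_ext; intros x. rewrite !(image_iter_iff T Ti) by auto.
    change (iter (S n) Ti (T x)) with (Ti (iter n Ti (T x))).
    rewrite <- iter_comm, H1. tauto.
Qed.

From Stdlib Require Import IndefiniteDescription.

Lemma choice_nat {A : Type} (P : nat -> A -> Prop) : (forall n, exists x, P n x) -> exists f, forall n, P n (f n).
Proof.
  intros H. exists (fun n => proj1_sig (constructive_indefinite_description _ (H n))).
  intros n. exact (proj2_sig (constructive_indefinite_description _ (H n))).
Qed.

Lemma small_inv (eps : R) : 0 < eps -> exists N, forall n, (n >= N)%nat -> / (INR n + 1) < eps.
Proof.
  intros He. destruct (archimed_cor1 eps He) as (N & HN & HN0). exists N. intros n Hn.
  apply Rle_lt_trans with (/ INR N); auto.
  apply Rinv_le_contravar. apply lt_0_INR; auto.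
  apply le_INR in Hn. lra.
Qed.

Lemma phi_ge (phi : nat -> nat) : (forall n m, (n < m)%nat -> (phi n < phi m)%nat) -> forall n, (n <= phi n)%nat.
Proof. intros H n. induction n as [|n IH]; [lia|]. specialize (H n (S n)). lia. Qed.

Lemma inv_pos n : 0 < / (INR n + 1).
Proof. apply Rinv_0_lt_compat. pose proof (pos_INR n). lra. Qed.

Lemma compact_borel {s : Space} (K : set s) : is_compact K -> borel K.
Proof.
  intros HK. apply borel_double_compl, borel_open. intros x Hx.
  apply NNPP. intros Hno.
  assert (Hs : forall n : nat, exists y, dst s x y < / (INR n + 1) /\ K y).
  { intros n. apply NNPP; intros Hn. apply Hno. exists (/ (INR n + 1)); split; [apply inv_pos|].
    intros y Hy HKy. apply Hn. exists y; auto. }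
  apply choice_nat in Hs as (u & Hu).
  destruct (HK u (fun n => proj2 (Hu n))) as (phi & l & Hphi & Kl & Hconv).
  assert (Hxl : dst s x l <= 0).
  { apply Rnot_lt_le. intros Hpos.
    destruct (Hconv (dst s x l / 2)) as (N1 & HN1); [lra|].
    destruct (small_inv (dst s x l / 2)) as (N2 & HN2); [lra|].
    set (n := max N1 N2).
    specialize (HN1 n ltac:(lia)). specialize (HN2 (phi n)).
    assert (phi n >= N2)%nat by (pose proof (phi_ge phi Hphi n); lia).
    specialize (HN2 H). pose proof (proj1 (Hu (phi n))).
    pose proof (dist_tri s x (u (phi n)) l). lra. }
  apply dist_zero in Hxl. subst. auto.
Qed.

Lemma compact_nbhd {s : Space} (K U : set s) : is_compact K -> is_open U -> (forall x, K x -> U x) ->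
  exists d, 0 < d /\ forall x y, K x -> dst s x y < d -> U y.
Proof.
  intros HK HU Hsub. apply NNPP. intros Hno.
  assert (Hs : forall n : nat, exists p : pt s * pt s, K (fst p) /\ dst s (fst p) (snd p) < / (INR n + 1) /\ ~ U (snd p)).
  { intros n. apply NNPP; intros Hn. apply Hno. exists (/ (INR n + 1)); split; [apply inv_pos|].
    intros x y Kx Hxy. apply NNPP; intros Uy. apply Hn. exists (x, y); simpl; auto. }
  apply choice_nat in Hs as (u & Hu).
  destruct (HK (fun n => fst (u n)) (fun n => proj1 (Hu n))) as (phi & l & Hphi & Kl & Hconv).
  destruct (HU l (Hsub l Kl)) as (e & He & Hb).
  destruct (Hconv (e / 2)) as (N1 & HN1); [lra|].
  destruct (small_inv (e / 2)) as (N2 & HN2); [lra|].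
  set (n := max N1 N2).
  specialize (HN1 n ltac:(lia)). specialize (HN2 (phi n)).
  assert (phi n >= N2)%nat by (pose proof (phi_ge phi Hphi n); lia).
  specialize (HN2 H). destruct (Hu (phi n)) as (_ & Hd & HnU).
  apply HnU, Hb. simpl in HN1.
  pose proof (dist_tri s l (fst (u (phi n))) (snd (u (phi n)))).
  rewrite dist_sym in HN1. lra.
Qed.

Lemma dir1 (s : Space) (mu : set s -> R) (T : pt s -> pt s) (n : nat -> nat) :
  is_measure mu -> radon mu -> homeomorphism T -> measure_preserving mu T ->
  uniformly_rigid_along T n -> rigid_along mu T n.
Proof.
  intros Hm Hr HT Hmp Hu A HA eps Heps.
  set (e := eps / 6).
  destruct (Hr A HA e ltac:(unfold e; lra)) as [(K & HKc & HKA & HK) (U & HUo & HAU & HU)].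
  assert (HKb : borel K) by (apply compact_borel; auto).
  assert (HUb : borel U) by (apply borel_open; auto).
  destruct (compact_nbhd K U HKc HUo ltac:(auto)) as (d & Hd & Hnb).
  destruct (Hu (d / 2) ltac:(lra)) as (K0 & HK0).
  exists K0. intros k Hk. specialize (HK0 k Hk).
  set (t := n k) in *.
  set (B := image_iter T t A). set (L := image_iter T t K).
  assert (HBb : borel B) by (apply image_borel; auto).
  assert (HLb : borel L) by (apply image_borel; auto).
  assert (HLB : forall x, L x -> B x) by (intros x (y & Hy & <-); exists y; auto).
  assert (HLU : forall x, L x -> U x).
  { intros x (y & Hy & <-). apply (Hnb y); auto. specialize (HK0 y). rewrite dist_sym. lra. }
  assert (HmB : mu B = mu A) by (apply mu_image; auto).
  assert (HmL : mu L = mu K) by (apply mu_image; auto).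
  set (S1 := fun x => A x /\ ~ K x). set (S2 := fun x => K x /\ ~ L x).
  set (S3 := fun x => B x /\ ~ L x). set (S4 := fun x => U x /\ ~ A x).
  assert (b1 : borel S1) by (apply borel_diff; auto).
  assert (b2 : borel S2) by (apply borel_diff; auto).
  assert (b3 : borel S3) by (apply borel_diff; auto).
  assert (b4 : borel S4) by (apply borel_diff; auto).
  assert (E1 : mu A = mu K + mu S1) by (apply mu_split; auto).
  assert (E3 : mu B = mu L + mu S3) by (apply mu_split; auto).
  assert (E4 : mu U = mu A + mu S4) by (apply mu_split; auto).
  assert (E2 : mu S2 <= mu U - mu L).
  { assert (mu U = mu L + mu (fun x => U x /\ ~ L x)) by (apply mu_split; auto).
    assert (mu S2 <= mu (fun x => U x /\ ~ L x)); [|lra].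
    apply mu_mono; auto. apply borel_diff; auto. unfold S2; intros x [H1 H2]; split; auto. }
  assert (Hsd : borel (symdiff A B)) by (apply borel_symdiff; auto).
  assert (Hle : mu (symdiff A B) <= mu S1 + mu S2 + mu S3 + mu S4).
  { assert (b12 : borel (fun x => S1 x \/ S2 x)) by (apply borel_union; auto).
    assert (b123 : borel (fun x => (S1 x \/ S2 x) \/ S3 x)) by (apply borel_union; auto).
    assert (b1234 : borel (fun x => ((S1 x \/ S2 x) \/ S3 x) \/ S4 x)) by (apply borel_union; auto).
    apply Rle_trans with (mu (fun x => ((S1 x \/ S2 x) \/ S3 x) \/ S4 x)).
    - apply mu_mono; auto. intros x [[H1 H2]|[H1 H2]].
      + destruct (classic (K x)) as [Hx|Hx].
        * left; left; right. split; auto.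
        * left; left; left. split; auto.
      + destruct (classic (L x)) as [Hx|Hx].
        * right. split; auto.
        * left; right. split; auto.
    - pose proof (mu_subadd mu _ _ Hm b123 b4).
      pose proof (mu_subadd mu _ _ Hm b12 b3).
      pose proof (mu_subadd mu _ _ Hm b1 b2). lra. }
  pose proof (mu_pos mu _ Hm Hsd).
  unfold R_dist. rewrite Rminus_0_r, Rabs_right by lra.
  unfold e in *. lra.
Qed.


Lemma connect (a b : R) (P Q : R -> Prop) : a <= b ->
 (forall t, a<=t<=b -> P t \/ Q t) ->
 (forall t, a<=t<=b -> P t -> Q t -> False) ->
 (forall t, a<=t<=b -> P t -> exists d, 0<d /\ forall u, a<=u<=b -> Rabs(u-t) < d -> P u) ->
 (forall t, a<=t<=b -> Q t -> exists d, 0<d /\ forall u, a<=u<=b -> Rabs(u-t) < d -> Q u) ->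
 P a -> Q b -> False.
Proof.
  intros Hab Hor Hdis HP HQ Pa Qb.
  set (E := fun t => a <= t <= b /\ forall u, a <= u <= t -> P u).
  assert (Ea : E a). { split; [lra|]. intros u Hu. replace u with a by lra. auto. }
  assert (Hbd : bound E). { exists b. intros t [Ht _]. lra. }
  destruct (completeness E Hbd (ex_intro _ a Ea)) as (l & Hub & Hlub).
  assert (Hal : a <= l) by (apply Hub; auto).
  assert (Hlb : l <= b). { apply Hlub. intros t [Ht _]. lra. }
  assert (Key : forall u, a <= u < l -> P u).
  { intros u Hu. apply NNPP. intros HnP.
    assert (l <= u); [|lra]. apply Hlub. intros t [Ht Ht2].
    apply Rnot_lt_le. intros Htu. apply HnP, Ht2. lra. }
  destruct (Hor l ltac:(lra)) as [Pl|Ql].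
  - destruct (HP l ltac:(lra) Pl) as (d & Hd & Hb).
    destruct (Req_dec l b) as [->|Hne].
    + solve [eapply Hdis; eauto; lra].
    + set (t' := Rmin b (l + d/2)).
      assert (Et : E t').
      { unfold t'; split.
        - unfold Rmin; destruct Rle_dec; lra.
        - intros u Hu. destruct (Rlt_le_dec u l) as [Hul|Hul].
          + apply Key; lra.
          + apply Hb. unfold Rmin in Hu; destruct Rle_dec in Hu; lra.
            unfold Rmin in Hu; destruct Rle_dec in Hu; rewrite Rabs_right; lra. }
      apply Hub in Et. unfold t', Rmin in Et; destruct Rle_dec in Et; lra.
  - destruct (HQ l ltac:(lra) Ql) as (d & Hd & Hb).
    destruct (Req_dec l a) as [->|Hne].
    + solve [eapply Hdis; eauto; lra].
    + set (u := Rmax a (l - d/2)).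
      assert (Hu : a <= u < l) by (unfold u, Rmax; destruct Rle_dec; lra).
      apply (Hdis u); [lra| apply Key; auto |].
      apply Hb; [lra|]. unfold u, Rmax in *; destruct Rle_dec; rewrite Rabs_left; lra.
Qed.

Lemma cross (s : Space) (g : R -> pt s) (a b : R) (O1 O2 : set s) : a <= b ->
  is_open O1 -> is_open O2 ->
  (forall t, a <= t <= b -> forall e, 0 < e -> exists d, 0 < d /\
      forall u, a <= u <= b -> Rabs (u - t) < d -> dst s (g t) (g u) < e) ->
  (forall t, a <= t <= b -> O1 (g t) \/ O2 (g t)) ->
  (forall y, O1 y -> O2 y -> False) ->
  O1 (g a) -> O2 (g b) -> False.
Proof.
  intros Hab H1 H2 Hc Hor Hdis Ha Hb.
  apply (connect a b (fun t => O1 (g t)) (fun t => O2 (g t))); auto.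
  - intros t _; apply Hdis.
  - intros t Ht HO. destruct (H1 _ HO) as (e & He & Hball).
    destruct (Hc t Ht e He) as (d & Hd & Hd2). exists d; split; auto.
  - intros t Ht HO. destruct (H2 _ HO) as (e & He & Hball).
    destruct (Hc t Ht e He) as (d & Hd & Hd2). exists d; split; auto.
Qed.

Lemma list_min {I : Type} (f : I -> R) (l : list I) : (forall i, In i l -> 0 < f i) ->
  exists c, 0 < c /\ forall i, In i l -> c <= f i.
Proof.
  induction l as [|a l IH]; intros H.
  - exists 1; split; [lra|]. intros i [].
  - destruct IH as (c & Hc & Hc2). { intros i Hi; apply H; right; auto. }
    exists (Rmin c (f a)). split.
    + apply Rmin_glb_lt; auto. apply H; left; auto.
    + intros i [<-|Hi]. apply Rmin_r. eapply Rle_trans; [apply Rmin_l|auto].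
Qed.

Lemma list_max {I : Type} (P : I -> nat -> Prop) (l : list I) :
  (forall i, In i l -> exists N, forall k, (k >= N)%nat -> P i k) ->
  exists N, forall k, (k >= N)%nat -> forall i, In i l -> P i k.
Proof.
  induction l as [|a l IH]; intros H.
  - exists O. intros k _ i [].
  - destruct IH as (N & HN). { intros i Hi; apply H; right; auto. }
    destruct (H a (or_introl eq_refl)) as (N2 & HN2).
    exists (max N N2). intros k Hk i [<-|Hi].
    + apply HN2; lia.
    + apply HN; auto; lia.
Qed.

Lemma dir2_abstract (s : Space) (mu : set s -> R) (T : pt s -> pt s) (n : nat -> nat)
  (I : Type) (S : I -> set s) (l : list I) (eps : R) :
  is_measure mu -> homeomorphism T -> rigid_along mu T n ->
  (forall i, In i l -> borel (S i) /\ 0 < mu (S i)) ->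
  (forall t x, eps < dst s (iter t T x) x -> exists i i', In i l /\ In i' l /\
      forall y, S i' y -> symdiff (S i) (image_iter T t (S i)) y) ->
  exists K, forall k, (k >= K)%nat -> forall x, dst s (iter (n k) T x) x <= eps.
Proof.
  intros Hm HT Hr HS Hkey.
  destruct (list_min (fun i => mu (S i)) l) as (c & Hc & Hc2). { intros i Hi; apply HS; auto. }
  destruct (list_max (fun i k => mu (symdiff (S i) (image_iter T (n k) (S i))) < c) l) as (K & HK).
  { intros i Hi. destruct (Hr (S i) (proj1 (HS i Hi)) c Hc) as (N & HN). exists N.
    intros k Hk. specialize (HN k Hk). unfold R_dist in HN. rewrite Rminus_0_r in HN.
    pose proof (Rle_abs (mu (symdiff (S i) (image_iter T (n k) (S i))))). simpl. lra. }
  exists K. intros k Hk x. apply Rnot_lt_le. intros Hx.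
  destruct (Hkey _ _ Hx) as (i & i' & Hi & Hi' & Hsub).
  specialize (HK k Hk i Hi). simpl in HK.
  assert (mu (S i') <= mu (symdiff (S i) (image_iter T (n k) (S i)))).
  { apply mu_mono; auto. apply HS; auto. apply borel_symdiff. apply HS; auto.
    apply image_borel; auto. apply HS; auto. }
  specialize (Hc2 i' Hi'). lra.
Qed.


Definition ci := coord Interval.

Lemma clampI_ok (t : R) : 0 <= Rmax 0 (Rmin t 1) <= 1.
Proof. unfold Rmax, Rmin; repeat destruct Rle_dec; lra. Qed.

Definition piI (t : R) : pt Interval := exist _ (Rmax 0 (Rmin t 1)) (clampI_ok t).

Lemma piI_coord t : 0 <= t <= 1 -> ci (piI t) = t.
Proof. intros H. unfold ci, piI; simpl. unfold Rmax, Rmin; repeat destruct Rle_dec; lra. Qed.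

Lemma piI_lip t u : dst Interval (piI t) (piI u) <= Rabs (t - u).
Proof. simpl. unfold Rmax, Rmin; repeat destruct Rle_dec; rcases; lra. Qed.

Lemma piI_id w : piI (ci w) = w.
Proof. apply coord_inj. destruct (coord_range Interval w) as [H _]. apply piI_coord; auto. Qed.

Lemma ci_range w : 0 <= ci w <= 1.
Proof. apply (coord_range Interval w). Qed.

Lemma windowI_open a b : is_open (fun y : pt Interval => a < ci y < b).
Proof.
  intros y Hy. exists (Rmin (ci y - a) (b - ci y)). split.
  - apply Rmin_glb_lt; lra.
  - intros z Hz. change (dst Interval y z) with (Rabs (ci y - ci z)) in Hz.
    rcases; lra.
Qed.

Lemma path_cont (s : Space) (T : pt s -> pt s) (t : nat) (pi : R -> pt s) :
  homeomorphism T -> (forall a b, dst s (pi a) (pi b) <= Rabs (a - b)) ->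
  forall a, forall e, 0 < e -> exists d, 0 < d /\
      forall u, Rabs (u - a) < d -> dst s (iter t T (pi a)) (iter t T (pi u)) < e.
Proof.
  intros (HT & _) Hlip a e He.
  destruct (cont_iter T t HT (pi a) e He) as (d & Hd & Hc).
  exists d; split; auto. intros u Hu. apply Hc.
  eapply Rle_lt_trans; [apply Hlip|]. rewrite Rabs_minus_sym; auto.
Qed.

Lemma int_core (T : pt Interval -> pt Interval) (t : nat) (a b : R) (A : set Interval) (c : R) :
  homeomorphism T -> 0 <= a <= b -> b <= 1 -> (forall u, a <= u <= b -> A (piI u)) ->
  (ci (iter t T (piI a)) < c < ci (iter t T (piI b)) \/ ci (iter t T (piI b)) < c < ci (iter t T (piI a))) ->
  forall y, ci y = c -> image_iter T t A y.
Proof.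
  intros HT Hab Hb HA Hc y Hy. apply NNPP; intros Hn.
  assert (Hne : forall u, a <= u <= b -> ci (iter t T (piI u)) <> c).
  { intros u Hu He. apply Hn. replace y with (iter t T (piI u)).
    - exists (piI u); split; auto.
    - apply coord_inj. change (ci (iter t T (piI u)) = ci y). lra. }
  assert (Hcont : forall t0, a <= t0 <= b -> forall e, 0 < e -> exists d, 0 < d /\
      forall u, a <= u <= b -> Rabs (u - t0) < d -> dst Interval (iter t T (piI t0)) (iter t T (piI u)) < e).
  { intros t0 _ e He. destruct (path_cont Interval T t piI HT piI_lip t0 e He) as (d & Hd & H).
    exists d; split; auto. }
  destruct Hc as [Hc|Hc].
  - apply (cross Interval (fun u => iter t T (piI u)) a b (fun z => -1 < ci z < c) (fun z => c < ci z < 2));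
      try apply windowI_open; try lra; auto.
    + intros u Hu. pose proof (Hne u Hu). pose proof (ci_range (iter t T (piI u))).
      destruct (Rlt_le_dec (ci (iter t T (piI u))) c); [left|right]; lra.
    + simpl; intros; lra.
    + pose proof (ci_range (iter t T (piI a))); simpl; lra.
    + pose proof (ci_range (iter t T (piI b))); simpl; lra.
  - apply (cross Interval (fun u => iter t T (piI u)) a b (fun z => c < ci z < 2) (fun z => -1 < ci z < c));
      try apply windowI_open; try lra; auto.
    + intros u Hu. pose proof (Hne u Hu). pose proof (ci_range (iter t T (piI u))).
      destruct (Rlt_le_dec (ci (iter t T (piI u))) c); [right|left]; lra.
    + simpl; intros; lra.
    + pose proof (ci_range (iter t T (piI a))); simpl; lra.
    + pose proof (ci_range (iter t T (piI b))); simpl; lra.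
Qed.

Lemma int_between (T : pt Interval -> pt Interval) (t : nat) (A : set Interval) (z x y : pt Interval) :
  homeomorphism T ->
  (forall u, Rmin (ci z) (ci x) <= u <= Rmax (ci z) (ci x) -> A (piI u)) ->
  (ci (iter t T z) < ci y < ci (iter t T x) \/ ci (iter t T x) < ci y < ci (iter t T z)) ->
  image_iter T t A y.
Proof.
  intros HT HA Hc. pose proof (ci_range z). pose proof (ci_range x).
  destruct (Rle_dec (ci z) (ci x)) as [Hzx|Hzx].
  - rewrite Rmin_left, Rmax_right in HA by lra.
    apply (int_core T t (ci z) (ci x) A (ci y)); auto; try lra.
    rewrite !piI_id. tauto.
  - rewrite Rmin_right, Rmax_left in HA by lra.
    apply (int_core T t (ci x) (ci z) A (ci y)); auto; try lra.
    rewrite !piI_id. tauto.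
Qed.

Lemma floor_nat m y : 0 <= y < INR m -> exists j, (j < m)%nat /\ INR j <= y < INR j + 1.
Proof.
  induction m as [|m IH]; intros Hy.
  - simpl in Hy; lra.
  - rewrite S_INR in Hy. destruct (Rlt_le_dec y (INR m)) as [H|H].
    + destruct (IH ltac:(lra)) as (j & Hj & Hj2). exists j; split; auto.
    + exists m; split; auto; lra.
Qed.

Definition PI (M : R) (j : nat) : set Interval := fun y => INR j - 1 < ci y * M < INR j + 1.

Lemma lt_div_l (a y M : R) : 0 < M -> (a < y * M <-> a / M < y).
Proof.
  intros HM. split; intros H.
  - replace y with ((y * M) / M) by (field; lra). unfold Rdiv.
    apply Rmult_lt_compat_r; auto. apply Rinv_0_lt_compat; auto.
  - replace a with ((a / M) * M) by (field; lra). apply Rmult_lt_compat_r; auto.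
Qed.

Lemma lt_div_r (a y M : R) : 0 < M -> (y * M < a <-> y < a / M).
Proof.
  intros HM. split; intros H.
  - replace y with ((y * M) / M) by (field; lra). unfold Rdiv.
    apply Rmult_lt_compat_r; auto. apply Rinv_0_lt_compat; auto.
  - replace a with ((a / M) * M) by (field; lra). apply Rmult_lt_compat_r; auto.
Qed.

Lemma PI_open M j : 0 < M -> is_open (PI M j).
Proof.
  intros HM.
  replace (PI M j) with (fun y => (INR j - 1) / M < ci y < (INR j + 1) / M).
  - apply windowI_open.
  - apply set_ext; intros y. unfold PI. rewrite (lt_div_l _ _ M), (lt_div_r _ _ M); auto. tauto.
Qed.

Lemma mult_lt_reg (a b M : R) : 0 < M -> a * M < b * M -> a < b.
Proof. intros. apply Rmult_lt_reg_r with M; auto. Qed.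

Lemma dir2_interval (mu : set Interval -> R) (T : pt Interval -> pt Interval) (n : nat -> nat) :
  is_measure mu -> full_support mu -> homeomorphism T -> rigid_along mu T n -> uniformly_rigid_along T n.
Proof.
  intros Hm Hfs HT Hr eps Heps.
  destruct (archimed_cor1 (eps / 4) ltac:(lra)) as (m & Hm1 & Hm0).
  set (M := INR m).
  assert (HM : 0 < M) by (apply lt_0_INR; auto).
  assert (HeM : 4 <= eps * M).
  { unfold M in *. apply Rlt_le. apply Rmult_lt_reg_r with (/ INR m). apply Rinv_0_lt_compat; auto.
    rewrite Rmult_assoc, Rinv_r, Rmult_1_r by lra. lra. }
  apply (dir2_abstract Interval mu T n nat (PI M) (seq 0 (S m)) eps Hm HT Hr).
  - intros j Hj. apply in_seq in Hj.
    assert (Hb : borel (PI M j)) by (apply borel_open, PI_open; auto).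
    split; auto. apply Hfs. apply PI_open; auto.
    assert (Hjm : INR j <= M) by (unfold M; apply le_INR; lia).
    assert (Hok : 0 <= INR j / M <= 1).
    { split. apply Rmult_le_pos; [apply pos_INR| left; apply Rinv_0_lt_compat; auto].
      unfold Rdiv. apply Rmult_le_reg_r with M; auto. rewrite Rmult_assoc, Rinv_l, Rmult_1_r by lra. lra. }
    exists (exist _ (INR j / M) Hok). unfold PI, ci; simpl.
    unfold Rdiv; rewrite Rmult_assoc, Rinv_l, Rmult_1_r by lra. lra.
  - intros t x Hx.
    change (dst Interval (iter t T x) x) with (Rabs (ci (iter t T x) - ci x)) in Hx.
    assert (Hcov : exists j, (j <= m)%nat /\ PI M j x).
    { pose proof (ci_range x) as Hx01. destruct (Rlt_le_dec (ci x) 1) as [H1|H1].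
      - destruct (floor_nat m (ci x * M)) as (j & Hj & Hj2).
        { split. apply Rmult_le_pos; lra. unfold M. replace (INR m) with (1 * INR m) at 2 by ring.
          apply Rmult_lt_compat_r; auto. }
        exists j; split; [lia|]. unfold PI; lra.
      - exists m; split; auto. unfold PI. replace (ci x) with 1 by lra. unfold M. lra. }
    destruct Hcov as (j & Hjm & Hxj).
    destruct (classic (exists z, PI M j z /\ PI M j (iter t T z))) as [(z & Hz & HTz)|Hno].
    2:{ exists j, j. split; [apply in_seq; lia|]. split; [apply in_seq; lia|].
        intros y Hy. left. split; auto. intros (z & Hz & Hzy). apply Hno. exists z. subst; auto. }
    set (X := ci (iter t T x) * M). set (xc := ci x * M).
    assert (HXM : 0 <= X <= M). { pose proof (ci_range (iter t T x)). unfold X. split; [nra|nra]. }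
    assert (Hconv : forall u, Rmin (ci z) (ci x) <= u <= Rmax (ci z) (ci x) -> PI M j (piI u)).
    { intros u Hu. pose proof (ci_range z). pose proof (ci_range x).
      assert (Hu01 : 0 <= u <= 1) by (unfold Rmin, Rmax in Hu; repeat destruct Rle_dec; lra).
      unfold PI in *. rewrite piI_coord by auto.
      unfold Rmin, Rmax in Hu; destruct Rle_dec in Hu; split; nra. }
    assert (Hdis : Rabs (ci (iter t T x) - ci x) * M = Rabs (X - xc)).
    { unfold X, xc. rewrite <- Rmult_minus_distr_r. rewrite Rabs_mult. rewrite (Rabs_right M) by lra. ring. }
    assert (HXx : eps * M < Rabs (X - xc)). { rewrite <- Hdis. apply Rmult_lt_compat_r; auto. }
    unfold PI in Hxj, HTz. fold xc in Hxj.
    destruct (Rlt_le_dec xc X) as [Hlt|Hle].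
    + rewrite Rabs_right in HXx by lra.
      assert (Hj2 : (j + 2 <= m)%nat).
      { assert (INR (j + 3) < INR m) by (rewrite plus_INR; simpl; fold M; lra). apply INR_lt in H. lia. }
      exists j, (j + 2)%nat. split; [apply in_seq; lia|]. split; [apply in_seq; lia|].
      intros y Hy. unfold PI in Hy. rewrite plus_INR in Hy. simpl in Hy.
      right. split.
      * apply int_between with z x; auto. left. unfold X, xc in *. split; apply mult_lt_reg with M; auto; lra.
      * unfold PI; lra.
    + rewrite Rabs_left1 in HXx by lra.
      assert (Hj2 : (3 <= j)%nat).
      { assert (INR 2 < INR j) by (simpl; lra). apply INR_lt in H. lia. }
      exists j, (j - 2)%nat. split; [apply in_seq; lia|]. split; [apply in_seq; lia|].
      intros y Hy. unfold PI in Hy. rewrite minus_INR in Hy by lia. simpl in Hy.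
      right. split.
      * apply int_between with z x; auto. right. unfold X, xc in *. split; apply mult_lt_reg with M; auto; lra.
      * unfold PI; lra.
Qed.


Lemma fp_eq (r : R) (k : Z) : 0 <= r + IZR k < 1 -> frac_part r = r + IZR k.
Proof.
  intros H. pose proof (base_fp r) as [H1 H2]. unfold frac_part in *.
  assert (E : (k + Int_part r = 0)%Z).
  { assert (-1 < IZR (k + Int_part r) < 1).
    { rewrite plus_IZR. lra. }
    destruct H0 as [H3 H4]. apply lt_IZR in H3. apply lt_IZR in H4. lia. }
  assert (IZR k = - IZR (Int_part r)). { rewrite <- opp_IZR. f_equal. lia. }
  lra.
Qed.

Lemma fp_cases (r : R) : -2 <= r < 2 ->
  (r < -1 /\ frac_part r = r + 2) \/ (-1 <= r < 0 /\ frac_part r = r + 1) \/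
  (0 <= r < 1 /\ frac_part r = r) \/ (1 <= r /\ frac_part r = r - 1).
Proof.
  intros H. destruct (Rlt_le_dec r (-1)).
  - left. split; auto. apply (fp_eq r 2). lra.
  - destruct (Rlt_le_dec r 0).
    + right; left. split; [lra|]. apply (fp_eq r 1). lra.
    + destruct (Rlt_le_dec r 1).
      * right; right; left. split; [lra|]. replace r with (r + IZR 0) at 2 by (simpl; ring). apply fp_eq. simpl; lra.
      * right; right; right. split; [lra|]. apply (fp_eq r (-1)). simpl; lra.
Qed.

Ltac fpc r := let h := fresh "fc" in let h2 := fresh "fb" in
  destruct (fp_cases r) as [h|[h|[h|h]]]; [lra|..]; destruct h as [h2 h]; rewrite ?h in *; clear h.

Ltac fpall := repeat match goal with |- context [frac_part ?r] =>
   lazymatch r with context [frac_part _] => fail | _ => fpc r end end.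

Definition cc := coord Circle.

Lemma cc_range y : 0 <= cc y < 1.
Proof. destruct y as [y Hy]; simpl; auto. Qed.

Definition off (c y : R) : R := frac_part (y - c).

Lemma off_range c y : 0 <= off c y < 1.
Proof. unfold off. pose proof (base_fp (y - c)). lra. Qed.

Lemma fp_ok v : 0 <= frac_part v < 1.
Proof. pose proof (base_fp v). lra. Qed.

Definition ptC (v : R) : pt Circle := exist _ (frac_part v) (fp_ok v).

Lemma off_ptC c t : -1 <= c < 1 -> 0 <= t < 1 -> off c (cc (ptC (t + c))) = t.
Proof.
  intros Hc Ht. unfold off, cc, ptC; simpl.
  fpall; lra.
Qed.

Lemma off_inj c y y' : -1 <= c < 1 -> off c (cc y) = off c (cc y') -> y = y'.
Proof.
  intros Hc H. apply coord_inj. change (cc y = cc y').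
  pose proof (cc_range y). pose proof (cc_range y'). unfold off in H.
  revert H. fpall; intros; lra.
Qed.

Lemma off_self c : 0 <= c < 1 -> off c c = 0.
Proof. intros. unfold off. fpall; lra. Qed.

Lemma dist_off c y x : -1 <= c < 1 ->
  dst Circle y x = Rmin (Rabs (off c (cc y) - off c (cc x))) (1 - Rabs (off c (cc y) - off c (cc x))).
Proof.
  intros Hc. pose proof (cc_range y). pose proof (cc_range x).
  change (dst Circle y x) with (Rmin (Rabs (cc y - cc x)) (1 - Rabs (cc y - cc x))).
  unfold off. fpall; rcases; lra.
Qed.

Definition clampC (t : R) := Rmax 0 (Rmin t (1/2)).

Lemma clampC_range t : 0 <= clampC t <= 1/2.
Proof. unfold clampC, Rmax, Rmin; repeat destruct Rle_dec; lra. Qed.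

Lemma clampC_id t : 0 <= t <= 1/2 -> clampC t = t.
Proof. unfold clampC, Rmax, Rmin; repeat destruct Rle_dec; lra. Qed.

Lemma clampC_lip t u : Rabs (clampC t - clampC u) <= Rabs (t - u).
Proof. unfold clampC, Rmax, Rmin; repeat destruct Rle_dec; rcases; lra. Qed.

Definition piC (c t : R) : pt Circle := ptC (clampC t + c).

Lemma off_piC c t : -1 <= c < 1 -> off c (cc (piC c t)) = clampC t.
Proof. intros Hc. unfold piC. apply off_ptC; auto. pose proof (clampC_range t). lra. Qed.

Lemma piC_lip c : -1 <= c < 1 -> forall t u, dst Circle (piC c t) (piC c u) <= Rabs (t - u).
Proof.
  intros Hc t u. rewrite (dist_off c) by auto. rewrite !off_piC by auto.
  eapply Rle_trans; [apply Rmin_l | apply clampC_lip].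
Qed.

Lemma piC_id c y : -1 <= c < 1 -> 0 <= off c (cc y) <= 1/2 -> piC c (off c (cc y)) = y.
Proof.
  intros Hc H. apply (off_inj c); auto. rewrite off_piC by auto. apply clampC_id; auto.
Qed.

Definition arcC (c a b : R) : set Circle := fun y => a < off c (cc y) < b.

Lemma arc_open c a b : -1 <= c < 1 -> 0 <= a -> b <= 1 -> is_open (arcC c a b).
Proof.
  intros Hc Ha Hb y Hy. unfold arcC in *.
  set (o := off c (cc y)) in *.
  exists (Rmin (o - a) (b - o)). split.
  - apply Rmin_glb_lt; lra.
  - intros z Hz. rewrite (dist_off c) in Hz by auto. fold o in Hz.
    pose proof (off_range c (cc z)).
    assert (E1 : Rmin (o - a) (b - o) <= o - a) by apply Rmin_l.
    assert (E2 : Rmin (o - a) (b - o) <= b - o) by apply Rmin_r.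
    set (e := Rmin (o - a) (b - o)) in *.
    rcases; lra.
Qed.

Lemma off_shift c q y : -1 <= c < 1 ->
  (off c (cc q) <= off c (cc y) /\ off (cc q) (cc y) = off c (cc y) - off c (cc q)) \/
  (off c (cc y) < off c (cc q) /\ off (cc q) (cc y) = off c (cc y) - off c (cc q) + 1).
Proof.
  intros Hc. pose proof (cc_range y). pose proof (cc_range q). unfold off. fpall; lra.
Qed.


Lemma circ_core (T : pt Circle -> pt Circle) (t : nat) (c a b : R) (A : set Circle) (p q : pt Circle) :
  homeomorphism T -> -1 <= c < 1 -> a <= b ->
  (forall u, a <= u <= b -> A (piC c u)) ->
  ~ image_iter T t A p -> ~ image_iter T t A q ->
  ((0 < off (cc q) (cc (iter t T (piC c a))) < off (cc q) (cc p) /\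
      off (cc q) (cc p) < off (cc q) (cc (iter t T (piC c b)))) \/
   (0 < off (cc q) (cc (iter t T (piC c b))) < off (cc q) (cc p) /\
      off (cc q) (cc p) < off (cc q) (cc (iter t T (piC c a))))) -> False.
Proof.
  intros HT Hc Hab HA Hp Hq Hf.
  pose proof (cc_range q) as Hq01.
  set (qc := cc q) in *. set (D := off qc (cc p)) in *.
  pose proof (off_range qc (cc p)). fold D in H.
  assert (Hne : forall u, a <= u <= b ->
     off qc (cc (iter t T (piC c u))) <> D /\ off qc (cc (iter t T (piC c u))) <> 0).
  { intros u Hu. assert (Him : image_iter T t A (iter t T (piC c u))) by (exists (piC c u); split; auto).
    split; intros He.
    - apply Hp. replace p with (iter t T (piC c u)); auto. apply (off_inj qc); auto; lra.
    - apply Hq. replace q with (iter t T (piC c u)); auto. apply (off_inj qc); [lra|].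
      rewrite He. fold qc. rewrite off_self; auto. }
  assert (Hcont : forall t0, a <= t0 <= b -> forall e, 0 < e -> exists d, 0 < d /\
      forall u, a <= u <= b -> Rabs (u - t0) < d -> dst Circle (iter t T (piC c t0)) (iter t T (piC c u)) < e).
  { intros t0 _ e He. destruct (path_cont Circle T t (piC c) HT (piC_lip c Hc) t0 e He) as (d & Hd & H0).
    exists d; split; auto. }
  assert (Hor : forall u, a <= u <= b -> arcC qc 0 D (iter t T (piC c u)) \/ arcC qc D 1 (iter t T (piC c u))).
  { intros u Hu. destruct (Hne u Hu). pose proof (off_range qc (cc (iter t T (piC c u)))).
    unfold arcC. destruct (Rlt_le_dec (off qc (cc (iter t T (piC c u)))) D); [left|right]; lra. }
  assert (Hdis : forall y, arcC qc 0 D y -> arcC qc D 1 y -> False) by (unfold arcC; intros; lra).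
  destruct Hf as [Hf|Hf].
  - apply (cross Circle (fun u => iter t T (piC c u)) a b (arcC qc 0 D) (arcC qc D 1)); auto;
      try (apply arc_open; lra).
    + unfold arcC; simpl. pose proof (off_range qc (cc (iter t T (piC c a)))). lra.
    + unfold arcC; simpl. pose proof (off_range qc (cc (iter t T (piC c b)))). lra.
  - apply (cross Circle (fun u => iter t T (piC c u)) a b (arcC qc D 1) (arcC qc 0 D)); auto;
      try (apply arc_open; lra).
    + intros u Hu; destruct (Hor u Hu); auto.
    + intros y H1 H2; eauto.
    + unfold arcC; simpl. pose proof (off_range qc (cc (iter t T (piC c a)))). lra.
    + unfold arcC; simpl. pose proof (off_range qc (cc (iter t T (piC c b)))). lra.
Qed.


Definition loC (r : nat) (L : R) := match r with O => 0 | 1%nat => 2 * L | _ => 1 - L end.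
Definition hiC (r : nat) (L : R) := match r with O => 2 * L | 1%nat => 3 * L | _ => 1 end.
Definition ptC_t (r : nat) (L : R) := match r with O => L | 1%nat => 5/2 * L | _ => 1 - L / 2 end.

Lemma dir2_circle (mu : set Circle -> R) (T : pt Circle -> pt Circle) (n : nat -> nat) :
  is_measure mu -> full_support mu -> homeomorphism T -> rigid_along mu T n -> uniformly_rigid_along T n.
Proof.
  intros Hm Hfs HT Hr eps Heps.
  destruct (archimed_cor1 (eps / 3) ltac:(lra)) as (N & HN1 & HN0).
  set (m := (N + 5)%nat). set (M := INR m).
  assert (HNpos : 0 < INR N) by (apply lt_0_INR; auto).
  assert (HM5 : INR N + 5 = M) by (unfold M, m; rewrite plus_INR; simpl; ring).
  assert (H3N : 3 < eps * INR N).
  { apply Rmult_lt_reg_r with (/ INR N). apply Rinv_0_lt_compat; auto.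
    rewrite Rmult_assoc, Rinv_r, Rmult_1_r by lra. lra. }
  set (L := / M).
  assert (HLM : L * M = 1) by (unfold L; field; lra).
  assert (HL0 : 0 < L) by (unfold L; apply Rinv_0_lt_compat; lra).
  assert (HL5 : L <= 1/5).
  { assert (5 <= M) by lra. nra. }
  assert (H3L : 3 * L <= eps).
  { assert (3 <= eps * M) by nra.
    replace (3 * L) with (3 * L * 1) by ring. rewrite <- HLM. nra. }
  set (cj := fun j : nat => (INR j - 1) * L).
  assert (Hcj : forall j, (j < m)%nat -> -1 <= cj j < 1).
  { intros j Hj. unfold cj. assert (INR j + 1 <= M) by (unfold M; rewrite <- S_INR; apply le_INR; lia).
    pose proof (pos_INR j). split; nra. }
  set (S := fun jr : nat * nat => arcC (cj (fst jr)) (loC (snd jr) L) (hiC (snd jr) L)).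
  apply (dir2_abstract Circle mu T n (nat * nat) S (list_prod (seq 0 m) (0 :: 1 :: 2 :: nil)%nat) eps Hm HT Hr).
  - intros [j r] Hjr. apply in_prod_iff in Hjr as [Hj Hr2]. apply in_seq in Hj.
    assert (Hc := Hcj j ltac:(lia)).
    assert (Hop : is_open (S (j, r))).
    { unfold S; simpl. apply arc_open; auto; destruct Hr2 as [<-|[<-|[<-|[]]]]; simpl; lra. }
    split; [apply borel_open; auto|]. apply Hfs; auto.
    exists (ptC (ptC_t r L + cj j)). unfold S, arcC; simpl.
    rewrite off_ptC; auto; destruct Hr2 as [<-|[<-|[<-|[]]]]; simpl; lra.
  - intros t x Hx.
    pose proof (cc_range x) as Hx01.
    destruct (floor_nat m (cc x * M)) as (j & Hjm & Hj).
    { split. apply Rmult_le_pos; lra. unfold M. replace (INR m) with (1 * INR m) at 2 by ring.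
      apply Rmult_lt_compat_r; [unfold M in HM5; lra|lra]. }
    set (c := cj j). assert (Hc : -1 <= c < 1) by (apply Hcj; auto).
    assert (HjL : INR j * L <= cc x < INR j * L + L).
    { replace (cc x) with (cc x * M * L) by (rewrite Rmult_assoc, (Rmult_comm M), HLM; ring).
      split; [|replace (INR j * L + L) with ((INR j + 1) * L) by ring]; nra. }
    set (o := fun y : pt Circle => off c (cc y)).
    assert (Hox : L <= o x < 2 * L).
    { unfold o, off, c, cj. fpall; nra. }
    set (P := arcC c 0 (2 * L)).
    assert (HPx : P x) by (unfold P, arcC; fold (o x); lra).
    assert (Hin : forall r, (r <= 2)%nat -> In (j, r) (list_prod (seq 0 m) (0 :: 1 :: 2 :: nil)%nat)).
    { intros r Hr2. apply in_prod_iff. split. apply in_seq; lia.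
      destruct r as [|[|[|r]]]; simpl; auto; lia. }
    destruct (classic (exists z, P z /\ P (iter t T z))) as [(z & Hz & HTz)|Hno].
    2:{ exists (j, O), (j, O). split; [apply Hin; lia|]. split; [apply Hin; lia|].
        intros y Hy. left. split; auto. intros (z & Hz & Hzy). apply Hno. exists z. subst; auto. }
    destruct (classic (forall y, arcC c (2 * L) (3 * L) y -> image_iter T t P y)) as [Hp|Hp].
    { exists (j, O), (j, 1%nat). split; [apply Hin; lia|]. split; [apply Hin; lia|].
      intros y Hy. right. split; [apply Hp; auto|]. unfold S, P, arcC in *; simpl in *. lra. }
    destruct (classic (forall y, arcC c (1 - L) 1 y -> image_iter T t P y)) as [Hq|Hq].
    { exists (j, O), (j, 2%nat). split; [apply Hin; lia|]. split; [apply Hin; lia|].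
      intros y Hy. right. split; [apply Hq; auto|]. unfold S, P, arcC in *; simpl in *. lra. }
    exfalso.
    apply not_all_ex_not in Hp as (p & Hp). apply imply_to_and in Hp as (Hp1 & Hp2).
    apply not_all_ex_not in Hq as (q & Hq). apply imply_to_and in Hq as (Hq1 & Hq2).
    unfold P, arcC in Hz, HTz, Hp1, Hq1.
    assert (Hpath : forall u, Rmin (o z) (o x) <= u <= Rmax (o z) (o x) -> P (piC c u)).
    { intros u Hu. unfold P, arcC. rewrite off_piC by auto. fold (o z) in Hz.
      assert (0 <= u <= 2 * L) by (unfold Rmin, Rmax in Hu; destruct Rle_dec in Hu; lra).
      rewrite clampC_id by lra. unfold Rmin, Rmax in Hu; destruct Rle_dec in Hu; lra. }
    assert (Ez : piC c (o z) = z) by (apply piC_id; auto; lra).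
    assert (Ex : piC c (o x) = x) by (apply piC_id; auto; unfold o in Hox; lra).
    rewrite (dist_off c) in Hx by auto.
    pose proof (Rmin_l (Rabs (off c (cc (iter t T x)) - off c (cc x))) (1 - Rabs (off c (cc (iter t T x)) - off c (cc x)))) as Hm1.
    pose proof (Rmin_r (Rabs (off c (cc (iter t T x)) - off c (cc x))) (1 - Rabs (off c (cc (iter t T x)) - off c (cc x)))) as Hm2.
    assert (Hineq : 0 < off (cc q) (cc (iter t T z)) < off (cc q) (cc p) /\
                    off (cc q) (cc p) < off (cc q) (cc (iter t T x))).
    { pose proof (off_range c (cc (iter t T x))). pose proof (off_range (cc q) (cc (iter t T x))).
      destruct (off_shift c q (iter t T z) Hc) as [[A1 A2]|[A1 A2]];
      destruct (off_shift c q p Hc) as [[B1 B2]|[B1 B2]];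
      destruct (off_shift c q (iter t T x) Hc) as [[C1 C2]|[C1 C2]];
      rewrite ?A2, ?B2, ?C2; unfold o in Hox; rcases; lra. }
    destruct (Rle_dec (o z) (o x)) as [Hzx|Hzx].
    + rewrite Rmin_left, Rmax_right in Hpath by lra.
      apply (circ_core T t c (o z) (o x) P p q HT Hc Hzx Hpath Hp2 Hq2).
      left. rewrite Ez, Ex. auto.
    + rewrite Rmin_right, Rmax_left in Hpath by lra.
      apply (circ_core T t c (o x) (o z) P p q HT Hc ltac:(lra) Hpath Hp2 Hq2).
      right. rewrite Ez, Ex. auto.
Qed.

Theorem lemma3p1 (s : Space) (mu : set s -> R) (T : pt s -> pt s) :
  is_measure mu -> nonatomic mu -> radon mu -> full_support mu ->
  homeomorphism T -> measure_preserving mu T ->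
  forall n : nat -> nat, tends_to_infty n ->
    (rigid_along mu T n <-> uniformly_rigid_along T n).
Proof.
  intros Hm Hna Hrad Hfs HT Hmp n Hn. split.
  - intros Hr. destruct s; [apply (dir2_interval mu) | apply (dir2_circle mu)]; auto.
  - apply dir1; auto.
Qed.
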